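(* Let $n\geq7$ and let $u,u',v,v'$ be monomials such that $x_{n-1}u,x_{n-1}u'\in\mathcal A$ and $x_nv,x_nv'\in\mathcal C$. If $uv>_{\mathcal R}u'v'$ in $F(J(P_{n-2})^2)$, then $x_{n-1}x_nuv>_{\mathcal R}x_{n-1}x_nu'v'$ in $F(J(P_n)^2)$.
   Context: For $m\geq 1$, $P_m$ is the path graph on vertices $x_1,\ldots,x_m$ with edges $\{x_i,x_{i+1}\}$; $J(P_m)$ is its cover ideal (generated by $\prod_{x\in C}x$, $C$ a minimal vertex cover); $G(I)$ denotes minimal monomial generators and $F(I^2)=\{ab:a,b\in G(I)\}$. The rooted list $\mathcal R(P_m)$: $\mathcal R(P_1)$ empty; $\mathcal R(P_2)=x_1,x_2$; $\mathcal R(P_3)=x_2,x_1x_3$; $\mathcal R(P_4)=x_1x_3,x_2x_3,x_2x_4$; for $m\geq5$, if $\mathcal R(P_{m-2})=u_1,\ldots,u_r$ and $\mathcal R(P_{m-3})=v_1,\ldots,v_s$, then $\mathcal R(P_m)=x_{m-1}u_1,\ldots,x_{m-1}u_r,x_mx_{m-2}v_1,\ldots,x_mx_{m-2}v_s$; it lists each element of $G(J(P_m))$ once. With $\mathcal R(P_m)=u_1,\ldots,u_q$, each $M\in F(J(P_m)^2)$ is $u_1^{a_1}\cdots u_q^{a_q}$ with $a_i\geq0$, $\sum a_i=2$; its maximal expression is the one with lexicographically largest exponent vector, and $M>_{\mathcal R}N$ on $F(J(P_m)^2)$ iff the maximal-expression exponent vector of $M$ is lexicographically larger than that of $N$. For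 $n\geq7$: $\mathcal A$ is the sublist of $\mathcal R(P_n)$ of elements divisible by $x_{n-1}x_{n-3}$ (equivalently $x_{n-1}x_{n-3}w$, $w\in\mathcal R(P_{n-4})$), and $\mathcal C$ is the sublist of elements divisible by $x_nx_{n-4}$ (equivalently $x_nx_{n-2}x_{n-4}w$, $w\in\mathcal R(P_{n-5})$). *)

(* Defs.v *)
From mathcomp Require Import all_boot.
Set Implicit Arguments. Unset Strict Implicit. Unset Printing Implicit Defensive.

(* Monomials in the variables x_1, x_2, ... are represented by their exponent
   vectors  nat -> nat  (index i = exponent of x_i; index 0 is unused).
   Equality of monomials is pointwise equality ( =1 ). *)
Definition mono := nat -> nat.

Definition xv (i : nat) : mono := fun j => (j == i : nat).
Definition mmul (a b : mono) : mono := fun j => a j + b j.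
Definition mdvd (d M : mono) : Prop := forall j, d j <= M j.
Definition mmem (M : mono) (l : seq mono) : Prop :=
  exists2 i, i < size l & nth (fun _ => 0) l i =1 M.

Fixpoint rooted (m : nat) : seq mono :=
  match m with
  | 0 => [::]
  | 1 => [::]
  | 2 => [:: xv 1; xv 2]
  | 3 => [:: xv 2; mmul (xv 1) (xv 3)]
  | 4 => [:: mmul (xv 1) (xv 3); mmul (xv 2) (xv 3); mmul (xv 2) (xv 4)]
  | S (S ((S ((S (S k)) as m3)) as m2)) =>
      (* m = k+5, m2 = m-2, m3 = m-3 *)
      [seq mmul (xv m2.+1) u | u <- rooted m2] ++
      [seq mmul (mmul (xv m2.+2) (xv m2)) w | w <- rooted m3]
  end.

Definition is_expr (m : nat) (a : seq nat) (M : mono) : Prop :=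
  size a = size (rooted m) /\ sumn a = 2 /\
  forall j, \sum_(i < size (rooted m)) nth 0 a i * nth (fun _ => 0) (rooted m) i j = M j.

Fixpoint lexlt (b a : seq nat) : bool :=
  match b, a with
  | y :: b', z :: a' => (y < z) || ((y == z) && lexlt b' a')
  | [::], _ :: _ => true
  | _, _ => false
  end.
Definition lexle (b a : seq nat) : bool := (b == a) || lexlt b a.

Definition is_max_expr (m : nat) (a : seq nat) (M : mono) : Prop :=
  is_expr m a M /\ forall b, is_expr m b M -> lexle b a.

Definition gtR (m : nat) (M N : mono) : Prop :=
  exists a b, [/\ is_max_expr m a M, is_max_expr m b N & lexlt b a].

Definition inA (n : nat) (M : mono) : Prop :=
  mmem M (rooted n) /\ mdvd (mmul (xv n.-1) (xv (n-3))) M.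
Definition inC (n : nat) (M : mono) : Prop :=
  mmem M (rooted n) /\ mdvd (mmul (xv n) (xv (n-4))) M.

(* Main.v *)
Require Import Defs.
From mathcomp Require Import all_boot zify.
From Stdlib Require List.
Set Implicit Arguments. Unset Strict Implicit. Unset Printing Implicit Defensive.

Arguments xv : simpl never.
Arguments mmul : simpl never.

Definition f0 : mono := fun _ => 0.

Fixpoint lin (d : seq nat) (L : seq mono) (j : nat) : nat :=
  match d, L with
  | x :: d', g :: L' => x * g j + lin d' L' j
  | _, _ => 0
  end.

Lemma linE d L j : size d = size L ->
  \sum_(i < size L) nth 0 d i * nth f0 L i j = lin d L j.
Proof.
elim: L d => [|g L IH] [|x d] //= Hs; first by rewrite big_ord0.
by rewrite big_ord_recl /= IH //; case: Hs.
Qed.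

Lemma lin_cat d1 d2 L1 L2 j : size d1 = size L1 ->
  lin (d1 ++ d2) (L1 ++ L2) j = lin d1 L1 j + lin d2 L2 j.
Proof.
elim: L1 d1 => [|g L1 IH] [|x d1] //= Hs.
by rewrite IH ?addnA //; case: Hs.
Qed.

Lemma lin_map d g L j : size d = size L ->
  lin d (map (mmul g) L) j = sumn d * g j + lin d L j.
Proof.
elim: L d => [|h L IH] [|x d] //= Hs.
rewrite IH; last by case: Hs.
rewrite /mmul; nia.
Qed.

Lemma lin_zero d L j : (forall g, List.In g L -> g j = 0) -> lin d L j = 0.
Proof.
elim: L d => [|g L IH] [|x d] //= H.
rewrite H; last by left.
rewrite muln0 IH // => h Hh; apply: H; by right.
Qed.

Lemma lin_ge d L j : size d = size L -> (forall g, List.In g L -> 0 < g j) ->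
  sumn d <= lin d L j.
Proof.
elim: L d => [|g L IH] [|x d] //= Hs H.
apply: leq_add; first by rewrite leq_pmulr //; apply: H; left.
apply: IH; first by case: Hs.
by move=> h Hh; apply: H; right.
Qed.

Lemma sumn0 d : sumn d = 0 -> d = nseq (size d) 0.
Proof.
elim: d => //= x d IH H.
have Hx : x = 0 by lia.
have Hd : sumn d = 0 by lia.
by rewrite Hx -IH.
Qed.

Lemma lin_nseq0 b L j : lin (nseq b 0) L j = 0.
Proof. by elim: b L => [|b IH] [|g L] //=; rewrite IH. Qed.

Lemma nth_In (s : seq mono) i : i < size s -> List.In (nth f0 s i) s.
Proof.
elim: s i => [|g s IH] [|i] //=; first by left.
by move=> H; right; apply: IH.
Qed.

Lemma lexlt_refl s : lexlt s s = false.
Proof. by elim: s => //= x s ->; rewrite ltnn eqxx. Qed.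

Lemma lexlt_cat s1 s2 t1 t2 : size s1 = size s2 ->
  lexlt (s1 ++ t1) (s2 ++ t2) = lexlt s1 s2 || ((s1 == s2) && lexlt t1 t2).
Proof.
elim: s1 s2 => [|x s1 IH] [|y s2] //= Hs.
rewrite IH; last by case: Hs.
rewrite eqseq_cons.
by case: (x < y); case: (x == y); case: (lexlt s1 s2); case: (s1 == s2).
Qed.

Lemma xv_ne i j : i <> j -> xv i j = 0.
Proof. by rewrite /xv; case: eqP => // ->. Qed.

Lemma xv_eq i : xv i i = 1.
Proof. by rewrite /xv eqxx. Qed.

Lemma rootedE k : rooted k.+1.+4 =
  [seq mmul (xv k.+4) u | u <- rooted k.+3] ++
  [seq mmul (mmul (xv k.+1.+4) (xv k.+3)) w | w <- rooted k.+2].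
Proof. by []. Qed.

Lemma supp m g : List.In g (rooted m) -> forall j, m < j -> g j = 0.
Proof.
elim/ltn_ind: m g => m IH g.
case: m IH => [|[|[|[|[|k] ] ] ] ] IH /=.
- by [].
- by [].
- by case=> [<-|[<-|[]]] j Hj; rewrite xv_ne //; lia.
- by case=> [<-|[<-|[]]] j Hj; rewrite /mmul ?xv_ne //; lia.
- by case=> [<-|[<-|[<-|[]]]] j Hj; rewrite /mmul ?xv_ne //; lia.
- rewrite -/(rooted k.+1.+4) rootedE.
  case/List.in_app_iff => /List.in_map_iff [w [<- Hw]] j Hj.
  + rewrite /mmul (IH k.+3 _ w Hw j) ?xv_ne //; lia.
  + rewrite /mmul (IH k.+2 _ w Hw j) ?xv_ne //; lia.
Qed.

Lemma nth_supp m i j : m < j -> nth f0 (rooted m) i j = 0.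
Proof.
move=> Hj; case: (ltnP i (size (rooted m))) => Hi.
  exact: (supp (nth_In Hi) Hj).
idtac.
by rewrite nth_default.
Qed.

Lemma split3 k : exists Q0 Rr, [/\ rooted k.+4 = Q0 ++ Rr,
  size Q0 = size (rooted k.+2),
  (forall d j, size d = size Q0 ->
     lin d Q0 j = sumn d * xv k.+3 j + lin d (rooted k.+2) j),
  (forall g, List.In g Q0 -> g k.+4 = 0) &
  (forall g, List.In g Rr -> g k.+3 = 0 /\ 0 < g k.+4)].
Proof.
case: k => [|k].
- exists [:: mmul (xv 1) (xv 3); mmul (xv 2) (xv 3)], [:: mmul (xv 2) (xv 4)].
  split.
  + by [].
  + by [].
  + move=> [|x [|y [|z d]]] j //= _; rewrite /mmul; nia.
  + by move=> g [<-|[<-|[]]]; rewrite /mmul !xv_ne.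
  + by move=> g [<-|[]]; rewrite /mmul /xv.
- exists [seq mmul (xv k.+4) u | u <- rooted k.+3],
         [seq mmul (mmul (xv k.+1.+4) (xv k.+3)) w | w <- rooted k.+2].
  split.
  + by rewrite rootedE.
  + by rewrite size_map.
  + move=> d j; rewrite size_map => Hs; exact: lin_map.
  + move=> g /List.in_map_iff [w [<- Hw]]; rewrite /mmul xv_ne ?(supp Hw) //; lia.
  + move=> g /List.in_map_iff [w [<- Hw]]; split.
      rewrite /mmul (supp Hw) ?xv_ne //; lia.
    rewrite /mmul xv_eq; lia.
Qed.

Lemma nth_mapm g (s : seq mono) i j : i < size s ->
  nth f0 (map (mmul g) s) i j = g j + nth f0 s i j.
Proof. by move=> Hi; rewrite (nth_map f0). Qed.

Lemma u_facts k u : inA k.+3.+4 (mmul (xv k.+2.+4) u) ->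
  u k.+4 = 1 /\ forall j, k.+4 < j -> u j = 0.
Proof.
case=> [[i Hi Hn] Hd].
have Hu4 : 0 < u k.+4.
  move: (Hd k.+4); rewrite /= (_ : k.+3.+4 - 3 = k.+4) // /mmul xv_eq xv_ne //; lia.
move: Hi Hn; rewrite (rootedE k.+2) nth_cat size_cat !size_map.
case: (ltnP i (size (rooted k.+1.+4))) => Hi1 Hi Hn; last first.
  move: (Hn k.+2.+4); rewrite nth_mapm; last by lia.
  rewrite /mmul nth_supp // ?xv_eq !xv_ne //; lia.
have Hu : forall j, u j = nth f0 (rooted k.+1.+4) i j.
  move=> j; move: (Hn j); rewrite nth_mapm // /mmul; lia.
move: Hi1 Hu; rewrite rootedE nth_cat size_cat !size_map.
case: (ltnP i (size (rooted k.+3))) => Hi2 Hi1 Hu; last first.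
  move: (Hu k.+4); rewrite nth_mapm; last by lia.
  rewrite /mmul nth_supp // ?xv_eq !xv_ne //; lia.
split.
  by rewrite Hu nth_mapm // /mmul nth_supp // xv_eq.
move=> j Hj; rewrite Hu nth_mapm // /mmul nth_supp; last lia.
rewrite xv_ne; lia.
Qed.

Lemma v_facts k v : inC k.+3.+4 (mmul (xv k.+3.+4) v) ->
  [/\ v k.+4 = 0, v k.+1.+4 = 1 & forall j, k.+1.+4 < j -> v j = 0].
Proof.
case=> [[i Hi Hn] Hd].
have Hv3 : 0 < v k.+3.
  move: (Hd k.+3); rewrite (_ : k.+3.+4 - 4 = k.+3) // /mmul xv_eq xv_ne //; lia.
move: Hi Hn; rewrite (rootedE k.+2) nth_cat size_cat !size_map.
case: (ltnP i (size (rooted k.+1.+4))) => Hi1 Hi Hn.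
  move: (Hn k.+3.+4); rewrite nth_mapm //.
  rewrite /mmul nth_supp // ?xv_eq !xv_ne //; lia.
set i' := i - _ in Hn.
have Hi' : i' < size (rooted k.+4) by rewrite /i'; lia.
have Hv : forall j, v j = xv k.+1.+4 j + nth f0 (rooted k.+4) i' j.
  move=> j; move: (Hn j); rewrite nth_mapm // /mmul; lia.
have Hw4 : nth f0 (rooted k.+4) i' k.+4 = 0.
  have [Q0 [Rr [ER _ _ HQ HR]]] := split3 k.
  move: Hi' Hv; rewrite ER nth_cat size_cat.
  case: (ltnP i' (size Q0)) => Hi2 Hi' Hv.
    by apply: HQ; apply: nth_In.
  have [H3 _] := HR _ (nth_In (s:=Rr) (i:=i' - size Q0) ltac:(lia)).
  move: (Hv k.+3); rewrite H3 xv_ne //; lia.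
split.
- by rewrite Hv Hw4 xv_ne; lia.
- by rewrite Hv nth_supp // xv_eq.
- move=> j Hj; rewrite Hv nth_supp; last lia.
  rewrite xv_ne; lia.
Qed.

Ltac xvs := repeat (rewrite xv_eq || (rewrite xv_ne; [|lia])).

Lemma lz m d j : m < j -> lin d (rooted m) j = 0.
Proof. by move=> H; apply: lin_zero => g Hg; apply: (supp Hg). Qed.

Lemma is_exprP m a M : is_expr m a M <->
  [/\ size a = size (rooted m), sumn a = 2 & forall j, lin a (rooted m) j = M j].
Proof.
split.
- by case=> [Hs [Hsum Hl]]; split => // j; rewrite -linE // Hl.
- by case=> Hs Hsum Hl; split => //; split => // j; rewrite linE.
Qed.

Lemma sizeLp k : size (rooted k.+1.+4) = size (rooted k.+3) + size (rooted k.+2).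
Proof. by rewrite rootedE size_cat !size_map. Qed.

Lemma LpE k a1 a2 j : size a1 = size (rooted k.+3) -> size a2 = size (rooted k.+2) ->
  lin (a1 ++ a2) (rooted k.+1.+4) j =
  sumn a1 * xv k.+4 j + lin a1 (rooted k.+3) j +
  (sumn a2 * (xv k.+1.+4 j + xv k.+3 j) + lin a2 (rooted k.+2) j).
Proof.
move=> H1 H2.
by rewrite rootedE lin_cat ?size_map // !lin_map.
Qed.

Lemma LE k Q0 Rr d1 d2 d3 d4 j :
  rooted k.+4 = Q0 ++ Rr -> size Q0 = size (rooted k.+2) ->
  (forall d j, size d = size Q0 ->
     lin d Q0 j = sumn d * xv k.+3 j + lin d (rooted k.+2) j) ->
  size d1 = size (rooted k.+3) -> size d2 = size (rooted k.+2) ->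
  size d3 = size (rooted k.+2) -> size d4 = size Rr ->
  lin (d1 ++ d2 ++ d3 ++ d4) (rooted k.+3.+4) j =
  (sumn d1 + sumn d2) * xv k.+2.+4 j
  + (sumn d1 * xv k.+4 j + lin d1 (rooted k.+3) j)
  + (sumn d2 * (xv k.+1.+4 j + xv k.+3 j) + lin d2 (rooted k.+2) j)
  + (sumn d3 + sumn d4) * (xv k.+3.+4 j + xv k.+1.+4 j)
  + (sumn d3 * xv k.+3 j + lin d3 (rooted k.+2) j) + lin d4 Rr j.
Proof.
move=> ER HQs HQ H1 H2 H3 H4.
have Hs12 : size (d1 ++ d2) = size (rooted k.+1.+4) by rewrite size_cat sizeLp H1 H2.
have Hs34 : size (d3 ++ d4) = size (rooted k.+4) by rewrite size_cat ER size_cat H3 H4 HQs.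
rewrite (rootedE k.+2) catA lin_cat ?size_map // !lin_map //.
rewrite LpE // ER lin_cat ?H3 // HQ ?H3 // !sumn_cat /mmul.
nia.
Qed.

Lemma splitL (d : seq nat) n1 n2 : size d = n1 + n2 ->
  exists d1 d2, [/\ d = d1 ++ d2, size d1 = n1 & size d2 = n2].
Proof.
move=> Hs; exists (take n1 d), (drop n1 d); split.
- by rewrite cat_take_drop.
- by rewrite size_takel // Hs leq_addr.
- by rewrite size_drop Hs addKn.
Qed.

Lemma sizeL k Q0 Rr : rooted k.+4 = Q0 ++ Rr -> size Q0 = size (rooted k.+2) ->
  size (rooted k.+3.+4) =
  size (rooted k.+3) + (size (rooted k.+2) + (size (rooted k.+2) + size Rr)).
Proof.
move=> ER HQs.
rewrite (rootedE k.+2) size_cat !size_map sizeLp ER size_cat HQs; lia.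
Qed.

Lemma core1 k Q0 Rr (W M : mono) a1 a2 :
  rooted k.+4 = Q0 ++ Rr -> size Q0 = size (rooted k.+2) ->
  (forall d j, size d = size Q0 ->
     lin d Q0 j = sumn d * xv k.+3 j + lin d (rooted k.+2) j) ->
  W k.+1.+4 = 1 ->
  (forall j, M j = xv k.+2.+4 j + xv k.+3.+4 j + W j) ->
  size a1 = size (rooted k.+3) -> is_expr k.+1.+4 (a1 ++ a2) W ->
  is_expr k.+3.+4 (a1 ++ nseq (size (rooted k.+2)) 0 ++ a2 ++ nseq (size Rr) 0) M.
Proof.
move=> ER HQs HQ HW5 HM H1 /is_exprP [Hs Hsum Hl].
have H2 : size a2 = size (rooted k.+2).
  by move: Hs; rewrite size_cat sizeLp H1; lia.
have Hs2 : sumn a2 = 1.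
  have := Hl k.+1.+4; rewrite LpE // HW5 (@lz k.+3 a1 k.+1.+4 ltac:(lia))
    (@lz k.+2 a2 k.+1.+4 ltac:(lia)).
  xvs; nia.
have Hs1 : sumn a1 = 1 by move: Hsum; rewrite sumn_cat; lia.
apply/is_exprP; split.
- by rewrite (sizeL ER HQs) !size_cat !size_nseq H1 H2.
- by rewrite !sumn_cat !sumn_nseq Hs1 Hs2.
- move=> j; rewrite (LE j ER HQs HQ H1 (size_nseq _ _) H2 (size_nseq _ _)) !sumn_nseq !lin_nseq0.
  rewrite HM -(Hl j) LpE // Hs1 Hs2; nia.
Qed.

Lemma core2 k Q0 Rr (W M : mono) d :
  rooted k.+4 = Q0 ++ Rr -> size Q0 = size (rooted k.+2) ->
  (forall d j, size d = size Q0 ->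
     lin d Q0 j = sumn d * xv k.+3 j + lin d (rooted k.+2) j) ->
  (forall g, List.In g Rr -> g k.+3 = 0 /\ 0 < g k.+4) ->
  W k.+4 = 1 -> W k.+1.+4 = 1 -> (forall j, k.+1.+4 < j -> W j = 0) ->
  (forall j, M j = xv k.+2.+4 j + xv k.+3.+4 j + W j) ->
  is_expr k.+3.+4 d M ->
  exists g1 g2, [/\ size g1 = size (rooted k.+3), is_expr k.+1.+4 (g1 ++ g2) W &
    d = g1 ++ nseq (size (rooted k.+2)) 0 ++ g2 ++ nseq (size Rr) 0].
Proof.
move=> ER HQs HQ HR HW4 HW5 HW HM /is_exprP [Hs Hsum Hl].
rewrite (sizeL ER HQs) in Hs.
have [d1 [d' [Ed H1 Hs']]] := splitL Hs.
have [d2 [d'' [Ed' H2 Hs'']]] := splitL Hs'.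
have [d3 [d4 [Ed'' H3 H4]]] := splitL Hs''.
subst d d' d''.
have lR : forall j, k.+4 < j -> lin d4 Rr j = 0.
  move=> j Hj; apply: lin_zero => g Hg; apply: (@supp k.+4) => //.
  by rewrite ER; apply/List.in_app_iff; right.
have E := fun j => LE j ER HQs HQ H1 H2 H3 H4.
have e6 := Hl k.+2.+4; rewrite E HM (HW k.+2.+4 ltac:(lia)) (@lz k.+3 d1 k.+2.+4 ltac:(lia))
  (@lz k.+2 d2 k.+2.+4 ltac:(lia)) (@lz k.+2 d3 k.+2.+4 ltac:(lia)) (lR k.+2.+4 ltac:(lia)) in e6.
have e7 := Hl k.+3.+4; rewrite E HM (HW k.+3.+4 ltac:(lia)) (@lz k.+3 d1 k.+3.+4 ltac:(lia))
  (@lz k.+2 d2 k.+3.+4 ltac:(lia)) (@lz k.+2 d3 k.+3.+4 ltac:(lia)) (lR k.+3.+4 ltac:(lia)) in e7.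
have e5 := Hl k.+1.+4; rewrite E HM HW5 (@lz k.+3 d1 k.+1.+4 ltac:(lia))
  (@lz k.+2 d2 k.+1.+4 ltac:(lia)) (@lz k.+2 d3 k.+1.+4 ltac:(lia)) (lR k.+1.+4 ltac:(lia)) in e5.
have e4 := Hl k.+4; rewrite E HM HW4 (@lz k.+3 d1 k.+4 ltac:(lia))
  (@lz k.+2 d2 k.+4 ltac:(lia)) (@lz k.+2 d3 k.+4 ltac:(lia)) in e4.
have g4 : sumn d4 <= lin d4 Rr k.+4.
  by apply: lin_ge => // g Hg; case: (HR g Hg).
move: e4 e5 e6 e7; xvs => e4 e5 e6 e7.
have s2 : sumn d2 = 0 by nia.
have s1 : sumn d1 = 1 by nia.
have s4 : sumn d4 = 0 by nia.
have s3 : sumn d3 = 1 by nia.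
have Ed2 := sumn0 s2; have Ed4 := sumn0 s4.
rewrite H2 in Ed2; rewrite H4 in Ed4; subst d2 d4.
exists d1, d3; split => //.
- apply/is_exprP; split.
  + by rewrite size_cat sizeLp H1 H3.
  + by rewrite sumn_cat s1 s3.
  + move=> j; have := Hl j; rewrite E LpE // HM s1 s2 s3 s4 !lin_nseq0; nia.
Qed.

Lemma lex_phi b r (g1 g2 a1 a2 : seq nat) :
  size g1 = size a1 -> size g2 = size a2 ->
  lexlt (g1 ++ nseq b 0 ++ g2 ++ nseq r 0) (a1 ++ nseq b 0 ++ a2 ++ nseq r 0)
  = lexlt (g1 ++ g2) (a1 ++ a2).
Proof.
move=> H1 H2.
rewrite !lexlt_cat ?size_nseq // lexlt_refl eqxx /= lexlt_refl.
by rewrite andbF orbF.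
Qed.

Lemma lexle_phi b r (g1 g2 a1 a2 : seq nat) :
  size g1 = size a1 -> size g2 = size a2 ->
  lexle (g1 ++ g2) (a1 ++ a2) ->
  lexle (g1 ++ nseq b 0 ++ g2 ++ nseq r 0) (a1 ++ nseq b 0 ++ a2 ++ nseq r 0).
Proof.
move=> H1 H2; rewrite /lexle; case/orP => [|H].
  by rewrite eqseq_cat // => /andP[/eqP-> /eqP->]; rewrite eqxx.
by apply/orP; right; rewrite lex_phi.
Qed.

Lemma maxlift k Q0 Rr (W M : mono) al :
  rooted k.+4 = Q0 ++ Rr -> size Q0 = size (rooted k.+2) ->
  (forall d j, size d = size Q0 ->
     lin d Q0 j = sumn d * xv k.+3 j + lin d (rooted k.+2) j) ->
  (forall g, List.In g Rr -> g k.+3 = 0 /\ 0 < g k.+4) ->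
  W k.+4 = 1 -> W k.+1.+4 = 1 -> (forall j, k.+1.+4 < j -> W j = 0) ->
  (forall j, M j = xv k.+2.+4 j + xv k.+3.+4 j + W j) ->
  is_max_expr k.+1.+4 al W ->
  exists a1 a2, [/\ al = a1 ++ a2, size a1 = size (rooted k.+3),
    size a2 = size (rooted k.+2) &
    is_max_expr k.+3.+4 (a1 ++ nseq (size (rooted k.+2)) 0 ++ a2 ++ nseq (size Rr) 0) M].
Proof.
move=> ER HQs HQ HR HW4 HW5 HW HM [Ha Hmax].
have Hs : size al = size (rooted k.+3) + size (rooted k.+2).
  by case: Ha => Hs _; rewrite Hs sizeLp.
have [a1 [a2 [Ea H1 H2]]] := splitL Hs.
subst al.
exists a1, a2; split => //; split.
  exact: (core1 ER HQs HQ HW5 HM H1 Ha).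
move=> d Hd.
have [g1 [g2 [Hg1 Hg Ed]]] := core2 ER HQs HQ HR HW4 HW5 HW HM Hd.
subst d.
have Hg2 : size g2 = size a2.
  case: Hg => Hs' _; move: Hs'; rewrite size_cat sizeLp Hg1 H2; lia.
apply: lexle_phi; [by rewrite Hg1 H1 | exact: Hg2 | exact: Hmax].
Qed.

Theorem lemma3p13 (n : nat) (u u' v v' : mono) :
  7 <= n ->
  inA n (mmul (xv n.-1) u) -> inA n (mmul (xv n.-1) u') ->
  inC n (mmul (xv n) v) -> inC n (mmul (xv n) v') ->
  gtR (n - 2) (mmul u v) (mmul u' v') ->
  gtR n (mmul (mmul (mmul (xv n.-1) (xv n)) u) v)
        (mmul (mmul (mmul (xv n.-1) (xv n)) u') v').
Proof.
move=> Hn; have [k Ek] : exists k, n = k.+3.+4 by exists (n - 7); lia.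
subst n.
move=> HA HA' HC HC' [al [be [Ha Hb Hlt]]].
rewrite (_ : k.+3.+4 - 2 = k.+1.+4) // in Ha Hb.
have [Q0 [Rr [ER HQs HQ HQ4 HR]]] := split3 k.
have [Hu4 Hu] := u_facts HA.
have [Hu4' Hu'] := u_facts HA'.
have [Hv4 Hv5 Hv] := v_facts HC.
have [Hv4' Hv5' Hv'] := v_facts HC'.
have [a1 [a2 [Ea H1 H2 Hma]]] := maxlift (W := mmul u v)
  (M := mmul (mmul (mmul (xv k.+3.+4.-1) (xv k.+3.+4)) u) v)
  ER HQs HQ HR ltac:(rewrite /mmul; lia) ltac:(rewrite /mmul Hu; lia)
  (fun j Hj => ltac:(rewrite /mmul Hu ?Hv //; lia))
  (fun j => ltac:(rewrite /mmul /=; lia)) Ha.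
have [b1 [b2 [Eb H1' H2' Hmb]]] := maxlift (W := mmul u' v')
  (M := mmul (mmul (mmul (xv k.+3.+4.-1) (xv k.+3.+4)) u') v')
  ER HQs HQ HR ltac:(rewrite /mmul; lia) ltac:(rewrite /mmul Hu'; lia)
  (fun j Hj => ltac:(rewrite /mmul Hu' ?Hv' //; lia))
  (fun j => ltac:(rewrite /mmul /=; lia)) Hb.
exists (a1 ++ nseq (size (rooted k.+2)) 0 ++ a2 ++ nseq (size Rr) 0),
       (b1 ++ nseq (size (rooted k.+2)) 0 ++ b2 ++ nseq (size Rr) 0).
split => //.
rewrite lex_phi; last by rewrite H2 H2'.
  by rewrite -Ea -Eb.
by rewrite H1 H1'.
Qed.
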